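(* Let $n'\in\mathbb{N}$, $g\in\mathbb{N}$, and let $\phi:\mathbb{N}\to\mathbb{N}^{n'}$ be a monotonic map. Then $\phi$ changes the Stanley depth by $1-n'$ with respect to $g$ and $g':=\phi(g)$.
   Context: $\mathbb{N}^n$ carries the componentwise partial order; $[a,b]=\{c: a\le c\le b\}$; a map is monotonic if it preserves this order. A monotonic map $\phi:\mathbb{N}^n\to\mathbb{N}^{n'}$ changes the Stanley depth by $\ell\in\mathbb{Z}$ with respect to $g\in\mathbb{N}^n$ and $g'\in\mathbb{N}^{n'}$ if (1) $\phi(g)\le g'$, and (2) for every interval $[a',b']\subset[0,g']$, the set $\phi^{-1}([a',b'])\cap[0,g]$ is a finite disjoint union $\bigcup_i[a^i,b^i]$ of intervals with $\#\{j\in[n]: b^i_j=g_j\}\ge\#\{j\in[n']: b'_j=g'_j\}+\ell$ for all $i$. *)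

(* Defs.v *)
From Stdlib Require Import List.
From mathcomp Require Import all_boot all_order all_algebra.
Set Implicit Arguments. Unset Strict Implicit. Unset Printing Implicit Defensive.
Import GRing.Theory Num.Theory.

Definition vec (n : nat) := 'I_n -> nat.

Definition vle (n : nat) (a b : vec n) : Prop := forall i, a i <= b i.

Definition in_interval (n : nat) (a b c : vec n) : Prop := vle a c /\ vle c b.

Definition monotonic (n n' : nat) (phi : vec n -> vec n') : Prop :=
  forall a b, vle a b -> vle (phi a) (phi b).

Definition ntop (n : nat) (b g : vec n) : nat := #|[set j : 'I_n | b j == g j]|.

Definition changes_sdepth (n n' : nat) (phi : vec n -> vec n')
    (g : vec n) (g' : vec n') (l : int) : Prop :=
  vle (phi g) g' /\
  forall a' b' : vec n',
    (forall c, in_interval a' b' c -> in_interval (fun _ => 0) g' c) ->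
    exists s : seq (vec n * vec n),
      (forall p, List.In p s -> vle p.1 p.2) /\
      (* the union of the pieces is phi^-1([a',b']) \cap [0,g] *)
      (forall c, (in_interval a' b' (phi c) /\ in_interval (fun _ => 0) g c) <->
                 exists2 p, List.In p s & in_interval p.1 p.2 c) /\
      (forall i j, (i < size s)%N -> (j < size s)%N -> i <> j ->
         forall c, ~ (in_interval (List.nth i s (g, g)).1 (List.nth i s (g, g)).2 c /\
                      in_interval (List.nth j s (g, g)).1 (List.nth j s (g, g)).2 c)) /\
      (forall p, List.In p s -> ((ntop p.2 g)%:Z >= (ntop b' g')%:Z + l)%R).

Definition of_vec1 (a : vec 1) : nat := a ord0.
Definition to_vec1 (x : nat) : vec 1 := fun _ => x.

(* Main.v *)
Require Import Defs.
From mathcomp Require Import all_boot all_order all_algebra.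
From mathcomp Require Import zify.
Set Implicit Arguments.

Lemma vle1 (a b : vec 1) : vle a b <-> a ord0 <= b ord0.
Proof. split; [by move=> H; apply: H| by move=> H i; rewrite (ord1 i)]. Qed.

Lemma ntop_le (n : nat) (b g : vec n) : ntop b g <= n.
Proof. rewrite /ntop; apply: leq_trans (max_card _) _; by rewrite card_ord. Qed.

Lemma ntop_lt (n : nat) (b g : vec n) j : b j != g j -> ntop b g < n.
Proof.
move=> Hj; rewrite /ntop -[X in _ < X]card_ord -cardsT; apply: proper_card.
rewrite properT; apply/negP => /eqP E.
have : j \in [set: 'I_n] by rewrite inE.
by rewrite -E inE (negbTE Hj).
Qed.

Theorem lemma3p6 (n' : nat) (g : nat) (phi : nat -> vec n')
  (hmono : forall x y : nat, x <= y -> vle (phi x) (phi y)) :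
  changes_sdepth (fun a : vec 1 => phi (of_vec1 a)) (to_vec1 g) (phi g)
    (1 - (n'%:Z))%R.
Proof.
split; first by move=> i; rewrite /of_vec1 /to_vec1.
move=> a' b' _.
pose pb (x : nat) := [forall i, a' i <= phi x i] && [forall i, phi x i <= b' i].
have pbP x : reflect (in_interval a' b' (phi x)) (pb x).
  apply: (iffP andP) => [[/forallP H1 /forallP H2]|[H1 H2]]; first by split.
  by split; apply/forallP.
case: (boolP [exists x : 'I_g.+1, pb x]) => [/existsP [x0 Hx0]|Hne].
- case: (@arg_minnP _ x0 (fun i : 'I_g.+1 => pb i) (fun i => val i) Hx0) => lo Hlo Hlomin.
  case: (@arg_maxnP _ x0 (fun i : 'I_g.+1 => pb i) (fun i => val i) Hx0) => hi Hhi Hhimax.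
  exists [:: (to_vec1 lo, to_vec1 hi)]; split; [|split; [|split]].
  + move=> p [<-|[]] //=; apply/vle1; rewrite /to_vec1; exact: Hlomin.
  + move=> c; split.
    * move=> [/pbP Hc [_ /vle1 Hcg]].
      exists (to_vec1 lo, to_vec1 hi); first by left.
      have Hc' : c ord0 < g.+1 by rewrite ltnS.
      split; apply/vle1; rewrite /to_vec1.
      - exact: (Hlomin (Ordinal Hc')).
      - exact: (Hhimax (Ordinal Hc')).
    * move=> [p [<-|[]] //= [/vle1 H1 /vle1 H2]].
      rewrite /to_vec1 in H1 H2.
      move/pbP: Hlo => [Hl1 Hl2]; move/pbP: Hhi => [Hh1 Hh2].
      split; [split|split].
      - move=> i; apply: leq_trans (Hl1 i) _; exact: hmono.
      - move=> i; apply: leq_trans (Hh2 i); exact: hmono.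
      - by apply/vle1.
      - apply/vle1; rewrite /to_vec1; apply: leq_trans H2 _.
        by rewrite -ltnS.
  + move=> i j /= Hi Hj Hij; exfalso; apply: Hij; lia.
  + move=> p [<-|[]] //=.
    have Hb := ntop_le b' (phi g).
    have -> : ntop (to_vec1 hi) (to_vec1 g) = (hi == g :> nat).
      rewrite /ntop /to_vec1.
      case: eqP => E.
      * by rewrite (_ : [set _ | _] = setT) ?cardsT ?card_ord //; apply/setP=> k; rewrite !inE E eqxx.
      * by rewrite (_ : [set _ | _] = set0) ?cards0 //; apply/setP=> k; rewrite !inE; apply/eqP.
    case: eqP => E; first lia.
    have Hh : hi.+1 < g.+1 by have := ltn_ord hi; rewrite ltnS; lia.
    have Hnp : ~~ pb hi.+1.
      apply/negP => Hp; have := Hhimax (Ordinal Hh) Hp; rewrite /=; lia.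
    move/pbP: Hhi => [Hh1 _].
    have Ha : forall i, a' i <= phi hi.+1 i.
      move=> i; apply: leq_trans (Hh1 i) _; apply: hmono; lia.
    have : ~~ [forall i, phi hi.+1 i <= b' i].
      apply: contra Hnp => H; apply/andP; split => //; exact/forallP.
    rewrite negb_forall => /existsP [j Hj].
    have Hg : phi hi.+1 j <= phi g j by apply: hmono; lia.
    have Hneq : b' j != phi g j by apply/eqP => Eq; move: Hj; rewrite Eq Hg.
    have := @ntop_lt _ b' (phi g) j Hneq; lia.
- exists [::]; split; [by []|split; [|split]].
  + move=> c; split.
    * move=> [/pbP Hc [_ /vle1 Hcg]].
      have Hc' : c ord0 < g.+1 by rewrite ltnS.
      by move: Hne; rewrite negb_exists => /forallP /(_ (Ordinal Hc')) /negP.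
    * by move=> [p []].
  + by [].
  + by [].
Qed.
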